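(* Consider the free pre-Lie algebra with one generator, realized as $(\mathcal{T},\to)$. A monomial basis of $(\mathcal{T},\to)$ is tree-grounded if and only if there is a section $S$ of the forget-planarity projection $\pi:\mathcal{T}^{pl}\to\mathcal{T}$ such that the basis consists exactly of the monomials $m_{S(t)}$, $t\in T$, where for a planar rooted tree $\sigma$, $m_\sigma$ denotes the unique monomial whose evaluation in $(\mathcal{T}^{pl},\circ\!\!\searrow)$ equals $\sigma$; in that case the basis vectors (evaluations in $(\mathcal{T},\to)$) are the elements $\widetilde{\Psi}_S(t)=\pi\circ\Psi\circ S(t)$, $t\in T$.
   Context: $\mathcal{T}$ is the vector space spanned by the set $T$ of non-planar rooted trees, $\mathcal{T}^{pl}$ the space spanned by planar rooted trees, $\pi$ the linear forget-planarity projection; a section of $\pi$ is a linear map $S:\mathcal{T}\to\mathcal{T}^{pl}$ sending each tree $t$ to a planar tree with $\pi(S(t))=t$. The grafting $s\to t=\sum_{v\in V(t)}s\to_v t$ (graft the root of $s$ by a new edge onto vertex $v$ of $t$) makes $\mathcal{T}$ the free pre-Lie algebra on the one-vertex tree $\bullet$. The Butcher product on non-planar trees is $s\circ\!\!\rightarrow B_+(t_1\cdots t_k)=B_+(s\,t_1\cdots t_k)$, where $B_+$ attaches the roots of the given trees to a new root; on planar trees the left Butcher product $\sigma\circ\!\!\searrow B_+(\tau_1\cdots\tau_k)=B_+(\sigma\tau_1\cdots\tau_k)$ inserts $\sigma$ as leftmost branch, and $(\mathcal{T}^{pl},\circ\!\!\searrow)$ is the free magmatic algebra on $\bullet$. The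 left grafting on planar trees is $\sigma\searrow\tau=\sum_{v\in V(\tau)}\sigma\searrow_v\tau$ (graft $\sigma$ at $v$ as the leftmost branch), and $\Psi:\mathcal{T}^{pl}\to\mathcal{T}^{pl}$ is the linear map with $\Psi(\bullet)=\bullet$, $\Psi(\sigma_1\circ\!\!\searrow\sigma_2)=\Psi(\sigma_1)\searrow\Psi(\sigma_2)$. A monomial $m$ is a parenthesized word built from the letter $\bullet$ and one binary operation; $m(\bullet,\to)$, $m(\bullet,\circ\!\!\rightarrow)$, $m(\bullet,\circ\!\!\searrow)$ denote its evaluations using grafting, Butcher product, left Butcher product respectively. A monomial basis is a set of monomials whose evaluations $m(\bullet,\to)$ form a basis of $\mathcal{T}$. It is tree-grounded if the trees $m(\bullet,\circ\!\!\rightarrow)$ (its ''lower-energy terms''), for $m$ in the set, are exactly the rooted trees of $T$, each obtained once. *)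

(* Defs.v *)
From HB Require Import structures.
From mathcomp Require Import all_boot all_order all_algebra.
From Stdlib Require List.
Set Implicit Arguments. Unset Strict Implicit. Unset Printing Implicit Defensive.
Import GRing.Theory.

Inductive ptree := PNode of seq ptree.

Definition children (t : ptree) : seq ptree := let: PNode l := t in l.

Definition bullet : ptree := PNode [::].

Fixpoint ptree_enc (t : ptree) : GenTree.tree unit :=
  let: PNode l := t in GenTree.Node 0 (map ptree_enc l).

Fixpoint ptree_dec (x : GenTree.tree unit) : ptree :=
  match x with
  | GenTree.Leaf _ => PNode [::]
  | GenTree.Node _ l => PNode (map ptree_dec l)
  end.

Fixpoint ptree_encK (t : ptree) : ptree_dec (ptree_enc t) = t :=
  match t with
  | PNode l => f_equal PNode
      ((fix F (l : seq ptree) : map ptree_dec (map ptree_enc l) = l :=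
          match l with
          | [::] => erefl
          | x :: l' => f_equal2 cons (ptree_encK x) (F l')
          end) l)
  end.

HB.instance Definition _ := Countable.copy ptree (can_type ptree_encK).

Fixpoint ptree_ind' (P : ptree -> Prop)
  (H : forall l, (forall x, List.In x l -> P x) -> P (PNode l)) (t : ptree) : P t :=
  match t with
  | PNode l => H l
      ((fix F (l : seq ptree) : forall x, List.In x l -> P x :=
          match l with
          | [::] => fun x (hx : List.In x [::]) => match hx with end
          | y :: l' => fun x hx =>
              match hx with
              | or_introl e => eq_ind y P (ptree_ind' H y) x e
              | or_intror h => F l' x h
              end
          end) l)
  end.

Lemma ptree_ind2 (P : ptree -> Prop) :
  (forall l, (forall x, x \in l -> P x) -> P (PNode l)) -> forall t, P t.
Proof.
move=> H; apply: ptree_ind' => l IH; apply: H => x xl; apply: IH; move: xl.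
elim: l => //= y l IHl; rewrite in_cons => /orP [/eqP -> | /IHl]; by [left | right].
Qed.

(* A non-planar rooted tree is represented by its canonical planar
   representative: the subtrees at every vertex are (recursively canonical
   and) sorted by a fixed total order on planar trees. *)
Definition ple (a b : ptree) : bool := (pickle a <= pickle b)%N.

Fixpoint canon (t : ptree) : ptree :=
  let: PNode l := t in PNode (sort ple (map canon l)).

Lemma canon_idem (t : ptree) : canon (canon t) = canon t.
Proof.
elim/ptree_ind2: t => l IH /=; congr PNode.
rewrite (@map_id_in _ canon); last first.
  by move=> x; rewrite mem_sort => /mapP [y yl ->]; apply: IH.
apply: sorted_sort.
  by move=> a b c; apply: leq_trans.
by apply: sort_sorted => a b; apply: leq_total.
Qed.

Lemma canon_idemb (t : ptree) : canon (canon t) == canon t.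
Proof. by rewrite canon_idem. Qed.

Definition ntree := {t : ptree | canon t == t}.

(* the forget-planarity projection piT (on trees; extended linearly to formal
   sums by [map piT]) *)
Definition piT (t : ptree) : ntree := @exist _ (fun u => canon u == u) (canon t) (canon_idemb t).

(* Elements of T and T^pl with nonnegative integer coefficients are
   represented as finite lists of trees (coefficient = multiplicity). *)

(* planar left grafting: sigma \searrow tau = sum over vertices v of tau of
   sigma grafted at v as leftmost branch *)
Fixpoint lgraft (s t : ptree) {struct t} : seq ptree :=
  match t with
  | PNode l => PNode (s :: l) :: map PNode
      ((fix aux (l : seq ptree) : seq (seq ptree) :=
          match l with
          | [::] => [::]
          | x :: l' => [seq u :: l' | u <- lgraft s x] ++ [seq x :: r | r <- aux l']
          end) l)
  end.

Definition lgraftS (xs ys : seq ptree) : seq ptree :=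
  flatten [seq lgraft x y | x <- xs, y <- ys].

Definition ngraft (s t : ntree) : seq ntree := map piT (lgraft (val s) (val t)).

Definition ngraftS (xs ys : seq ntree) : seq ntree :=
  flatten [seq ngraft x y | x <- xs, y <- ys].

Definition nbutcher (s t : ntree) : ntree := piT (PNode (val s :: children (val t))).

Definition lbutcher (s t : ptree) : ptree := PNode (s :: children t).

(* Psi : T^pl -> T^pl, Psi(bullet) = bullet,
   Psi(sigma1 o\ sigma2) = Psi(sigma1) \searrow Psi(sigma2)
   (every planar tree other than bullet is uniquely B+(sigma1 :: l) =
   sigma1 o\ B+(l)). *)
Fixpoint Psi (t : ptree) : seq ptree :=
  match t with
  | PNode l =>
      (fix aux (l : seq ptree) : seq ptree :=
         match l with
         | [::] => [:: bullet]
         | s :: l' => lgraftS (Psi s) (aux l')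
         end) l
  end.

(* parenthesized words in the letter bullet and one binary operation *)
Inductive mon := MLeaf | MOp of mon & mon.

Fixpoint mon_enc (m : mon) : GenTree.tree unit :=
  match m with
  | MLeaf => GenTree.Leaf tt
  | MOp a b => GenTree.Node 0 [:: mon_enc a; mon_enc b]
  end.

Fixpoint mon_dec (x : GenTree.tree unit) : mon :=
  match x with
  | GenTree.Node _ [:: a; b] => MOp (mon_dec a) (mon_dec b)
  | _ => MLeaf
  end.

Lemma mon_encK : cancel mon_enc mon_dec.
Proof. by elim=> //= a -> b ->. Qed.

HB.instance Definition _ := Countable.copy mon (can_type mon_encK).

Fixpoint eval_graft (m : mon) : seq ntree :=
  match m with
  | MLeaf => [:: piT bullet]
  | MOp a b => ngraftS (eval_graft a) (eval_graft b)
  end.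

Fixpoint eval_butcher (m : mon) : ntree :=
  match m with
  | MLeaf => piT bullet
  | MOp a b => nbutcher (eval_butcher a) (eval_butcher b)
  end.

Fixpoint eval_lbutcher (m : mon) : ptree :=
  match m with
  | MLeaf => bullet
  | MOp a b => lbutcher (eval_lbutcher a) (eval_lbutcher b)
  end.

Local Open Scope ring_scope.
Definition coef (K : fieldType) (xs : seq ntree) (u : ntree) : K :=
  (count_mem u xs)%:R.

Definition lin_comb (K : fieldType) (ms : seq mon) (c : mon -> K) (u : ntree) : K :=
  \sum_(m <- ms) c m * coef K (eval_graft m) u.

Definition monomial_basis (K : fieldType) (B : mon -> Prop) : Prop :=
  (forall (ms : seq mon) (c : mon -> K), uniq ms -> (forall m, m \in ms -> B m) ->
     (forall u, lin_comb ms c u = 0) -> forall m, m \in ms -> c m = 0)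
  /\ (forall t : ntree, exists (ms : seq mon) (c : mon -> K),
        (forall m, m \in ms -> B m) /\ forall u, lin_comb ms c u = (u == t)%:R).

(* tree-grounded: the lower-energy terms m(bullet, o->), m in B, are exactly
   the trees of T, each obtained once *)
Definition tree_grounded (B : mon -> Prop) : Prop :=
  (forall t : ntree, exists m, B m /\ eval_butcher m = t)
  /\ (forall m1 m2, B m1 -> B m2 -> eval_butcher m1 = eval_butcher m2 -> m1 = m2).

Definition section (S : ntree -> ptree) : Prop := forall t, piT (S t) = t.

(* B consists exactly of the monomials m_{S(t)}, t in T, where m_sigma is the
   unique monomial with m_sigma(bullet, o\) = sigma *)
Definition basis_of_section (B : mon -> Prop) (S : ntree -> ptree) : Prop :=
  forall m, B m <-> exists t, eval_lbutcher m = S t.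

(* Main.v *)
Require Import Defs.
From HB Require Import structures.
From mathcomp Require Import all_boot all_order all_algebra.
From Stdlib Require Import IndefiniteDescription.

Lemma ple_total : total ple. Proof. by move=> a b; apply: leq_total. Qed.
Lemma ple_tr : transitive ple. Proof. by move=> a b c; apply: leq_trans. Qed.
Lemma ple_asym : antisymmetric ple.
Proof. by move=> a b /andP[h1 h2]; apply: (pcan_inj (@pickleK _)); apply/eqP; rewrite eqn_leq; apply/andP; split. Qed.

Lemma sort_perm (a b : seq ptree) : perm_eq a b -> sort ple a = sort ple b.
Proof. by move/(perm_sortP ple_total ple_tr ple_asym). Qed.

Definition kap (r : seq ptree) := sort ple (map canon r).

Lemma canonE l : canon (PNode l) = PNode (kap l). Proof. by []. Qed.

Lemma map_canon_kap l : map canon (kap l) = kap l.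
Proof.
rewrite /kap (@map_id_in _ canon) // => x; rewrite mem_sort => /mapP[y _ ->].
exact: canon_idem.
Qed.

Lemma kap_perm r1 r2 : perm_eq (map canon r1) (map canon r2) -> kap r1 = kap r2.
Proof. exact: sort_perm. Qed.

Lemma kap_cons u1 u2 r1 r2 : canon u1 = canon u2 ->
  perm_eq (map canon r1) (map canon r2) -> kap (u1 :: r1) = kap (u2 :: r2).
Proof. by move=> e p; apply: kap_perm; rewrite /= e perm_cons. Qed.

Lemma kap_cons2 x r : kap (x :: r) = sort ple (canon x :: kap r).
Proof. by apply: sort_perm; rewrite /kap perm_cons perm_sym perm_sort. Qed.

Fixpoint gaux (s : ptree) (l : seq ptree) : seq (seq ptree) :=
  match l with
  | [::] => [::]
  | x :: l' => [seq u :: l' | u <- lgraft s x] ++ [seq x :: r | r <- gaux s l']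
  end.

Lemma lgraftE s l : lgraft s (PNode l) = PNode (s :: l) :: map PNode (gaux s l).
Proof. by rewrite /=; congr (_ :: map PNode _); elim: l => //= x l ->. Qed.

Lemma map_kap_consl a L : map kap [seq u :: a | u <- L] =
  map (fun c => sort ple (c :: map canon a)) (map canon L).
Proof. by rewrite -!map_comp. Qed.

Lemma map_kap_consr x G : map kap [seq x :: r | r <- G] =
  map (fun k => sort ple (canon x :: k)) (map kap G).
Proof. by rewrite -!map_comp; apply: eq_map => r; rewrite /= kap_cons2. Qed.

Lemma gaux_cons s s' x x' a b :
  canon x = canon x' ->
  perm_eq (map canon (lgraft s x)) (map canon (lgraft s' x')) ->
  perm_eq (map canon a) (map canon b) ->
  perm_eq (map kap (gaux s a)) (map kap (gaux s' b)) ->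
  perm_eq (map kap (gaux s (x :: a))) (map kap (gaux s' (x' :: b))).
Proof.
move=> ex pl pab pg /=; rewrite !map_cat; apply: perm_cat.
  rewrite !map_kap_consl.
  rewrite (@eq_map _ _ (fun c => sort ple (c :: map canon a)) (fun c => sort ple (c :: map canon b))); last first.
    by move=> c; apply: sort_perm; rewrite perm_cons.
  exact: perm_map.
by rewrite !map_kap_consr ex; apply: perm_map.
Qed.

Lemma swap_perm (p q : ptree) r : perm_eq [:: p, q & r] [:: q, p & r].
Proof. exact/permPl/(perm_catCA [:: p] [:: q] r). Qed.

Lemma gaux_swap s x y a :
  perm_eq (map kap (gaux s (x :: y :: a))) (map kap (gaux s (y :: x :: a))).
Proof.
have eA : map kap [seq u :: y :: a | u <- lgraft s x] = map kap [seq y :: r | r <- [seq u :: a | u <- lgraft s x]].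
  by rewrite -!map_comp; apply: eq_map => u; apply: kap_perm; apply: swap_perm.
have eB : map kap [seq x :: r | r <- [seq u :: a | u <- lgraft s y]] = map kap [seq u :: x :: a | u <- lgraft s y].
  by rewrite -!map_comp; apply: eq_map => u; apply: kap_perm; apply: swap_perm.
have eC : map kap [seq x :: r | r <- [seq y :: r | r <- gaux s a]] =
          map kap [seq y :: r | r <- [seq x :: r | r <- gaux s a]].
  by rewrite -!map_comp; apply: eq_map => u; apply: kap_perm; apply: swap_perm.
rewrite /= !map_cat eA eB eC.
by rewrite perm_catCA.
Qed.

Lemma gaux_move s x b1 b2 :
  perm_eq (map kap (gaux s (b1 ++ x :: b2))) (map kap (gaux s (x :: b1 ++ b2))).
Proof.
elim: b1 => [|y b1 IH]; first exact: perm_refl.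
rewrite perm_sym; apply: perm_trans (gaux_swap s x y (b1 ++ b2)) _; rewrite perm_sym.
rewrite cat_cons; apply: gaux_cons => //.
apply: perm_map; exact/permPl/(perm_catCA b1 [:: x] b2).
Qed.

Lemma gaux_perm s l1 l2 : perm_eq l1 l2 ->
  perm_eq (map kap (gaux s l1)) (map kap (gaux s l2)).
Proof.
elim: l1 l2 => [|x a IH] l2 p.
  by move: p; rewrite perm_sym => /perm_nilP ->.
have xl : x \in l2 by rewrite -(perm_mem p) mem_head.
move: p; case/splitPr: xl => b1 b2 p.
have h : perm_eq (b1 ++ x :: b2) (x :: b1 ++ b2) by exact/permPl/(perm_catCA b1 [:: x] b2).
have pa : perm_eq a (b1 ++ b2) by rewrite -(perm_cons x); apply: perm_trans p h.
rewrite perm_sym; apply: perm_trans (gaux_move s x b1 b2) _; rewrite perm_sym.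
apply: gaux_cons => //; last exact: IH.
exact: perm_map.
Qed.

Lemma map_canon_PNode G : map canon (map PNode G) = map PNode (map kap G).
Proof. by rewrite -!map_comp. Qed.

Lemma map_canon_idem l : map canon (map canon l) = map canon l.
Proof. by rewrite -map_comp; apply: eq_map => x; exact: canon_idem. Qed.

Lemma main y : forall s s', canon s = canon s' ->
  perm_eq (map canon (lgraft s y)) (map canon (lgraft s' (canon y))).
Proof.
elim/ptree_ind2: y => l IH s s' es.
rewrite canonE !lgraftE map_cons [X in perm_eq _ X]map_cons !map_canon_PNode.
have pk : perm_eq (map canon l) (map canon (kap l)).
  by rewrite map_canon_kap perm_sym /kap perm_sort.
rewrite !canonE (@kap_cons s s' l (kap l) es pk) perm_cons; apply: perm_map.
apply: (@perm_trans _ (map kap (gaux s' (map canon l)))); last first.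
  by apply: gaux_perm; rewrite /kap perm_sym perm_sort.
elim: l IH {pk} => [|x a IHa] IH //=.
apply: gaux_cons.
- by rewrite canon_idem.
- by apply: IH => //; rewrite mem_head.
- by rewrite map_canon_idem.
by apply: IHa => z za; apply: IH; rewrite in_cons za orbT.
Qed.

Lemma piT_perm xs ys : perm_eq (map canon xs) (map canon ys) ->
  perm_eq (map piT xs) (map piT ys).
Proof. by move=> p; apply: (perm_map_inj val_inj); rewrite -!map_comp. Qed.

Lemma graft_piT x y : perm_eq (map piT (lgraft x y)) (ngraft (piT x) (piT y)).
Proof. by apply: piT_perm; apply: main; rewrite canon_idem. Qed.

Lemma allpairs_perm (A B : Type) (C : eqType) (f g : A -> B -> seq C) xs ys :
  (forall x y, perm_eq (f x y) (g x y)) ->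
  perm_eq (flatten [seq f x y | x <- xs, y <- ys]) (flatten [seq g x y | x <- xs, y <- ys]).
Proof.
move=> H; elim: xs => [|x xs IH]; first exact: perm_refl.
rewrite !allpairs_cons !flatten_cat; apply: perm_cat => //.
elim: ys {IH} => [|y ys IHy]; first exact: perm_refl.
by apply: perm_cat.
Qed.

Lemma graftS_piT xs ys :
  perm_eq (map piT (lgraftS xs ys)) (ngraftS (map piT xs) (map piT ys)).
Proof.
rewrite /lgraftS /ngraftS map_flatten allpairs_mapl allpairs_mapr.
rewrite (_ : map (map piT) _ = [seq map piT (lgraft x y) | x <- xs, y <- ys]); last first.
  by rewrite map_allpairs.
by apply: allpairs_perm => x y; apply: graft_piT.
Qed.

Lemma ngraftS_perm xs xs' ys ys' : perm_eq xs xs' -> perm_eq ys ys' ->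
  perm_eq (ngraftS xs ys) (ngraftS xs' ys').
Proof.
move=> px py; apply: perm_flatten; apply: perm_allpairs_dep => // x _.
Qed.

Lemma Psi_cons x y : Psi (PNode (x :: children y)) = lgraftS (Psi x) (Psi y).
Proof. by case: y. Qed.

Lemma eval_graft_Psi m : perm_eq (eval_graft m) (map piT (Psi (eval_lbutcher m))).
Proof.
elim: m => [|a IHa b IHb]; first exact: perm_refl.
rewrite [eval_lbutcher _]/= /lbutcher Psi_cons /=.
apply: perm_trans (ngraftS_perm _ _ _ _ IHa IHb) _.
by rewrite perm_sym; apply: graftS_piT.
Qed.

Lemma ptree_eta t : t = PNode (children t). Proof. by case: t. Qed.

Lemma eval_l_inj : injective eval_lbutcher.
Proof.
elim=> [|a IHa b IHb] [|c d] //=.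
case=> e1 e2; rewrite (IHa c e1) (IHb d) //.
by rewrite (ptree_eta (eval_lbutcher b)) e2 -ptree_eta.
Qed.

Lemma eval_l_surj t : exists m, eval_lbutcher m = t.
Proof.
elim/ptree_ind2: t => l.
elim: l => [|x l IHl] IH; first by exists MLeaf.
have [mx ex] := IH x (mem_head _ _).
have [ml el] : exists ml, eval_lbutcher ml = PNode l.
  by apply: IHl => z zl; apply: IH; rewrite in_cons zl orbT.
by exists (MOp mx ml); rewrite /= ex el.
Qed.

Lemma eval_butcher_piT m : eval_butcher m = piT (eval_lbutcher m).
Proof.
apply: val_inj => /=; elim: m => [|a IHa b IHb] //=.
rewrite /nbutcher /lbutcher /= IHa IHb.
case: (eval_lbutcher b) => l /=.
congr PNode; apply: (@kap_cons _ _ (kap l) l); first exact: canon_idem.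
by rewrite map_canon_kap /kap perm_sort.
Qed.

Theorem lemma3p4 (K : fieldType) (B : mon -> Prop) :
  monomial_basis K B ->
  (tree_grounded B <-> exists S : ntree -> ptree, section S /\ basis_of_section B S)
  /\ (forall S : ntree -> ptree, section S -> basis_of_section B S ->
        forall (t : ntree) (m : mon), eval_lbutcher m = S t ->
          perm_eq (eval_graft m) (map piT (Psi (S t)))).
Proof.
move=> _; split; last by move=> S _ _ t m <-; exact: eval_graft_Psi.
split.
- case=> H1 H2.
  pose mt t := proj1_sig (constructive_indefinite_description _ (H1 t)).
  have Hmt t : B (mt t) /\ eval_butcher (mt t) = t :=
    proj2_sig (constructive_indefinite_description _ (H1 t)).
  exists (fun t => eval_lbutcher (mt t)); split.
    by move=> t; rewrite -eval_butcher_piT; exact: (Hmt t).2.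
  move=> m; split.
    move=> Bm; exists (eval_butcher m); congr eval_lbutcher.
    by apply: H2 => //; [exact: (Hmt _).1 | rewrite (Hmt _).2].
  by case=> t /eval_l_inj ->; exact: (Hmt t).1.
- case=> S [HS HB]; split.
    move=> t; have [m em] := eval_l_surj (S t); exists m; split.
      by apply/HB; exists t.
    by rewrite eval_butcher_piT em HS.
  move=> m1 m2 /HB [t1 e1] /HB [t2 e2].
  rewrite !eval_butcher_piT e1 e2 !HS => e.
  by apply: eval_l_inj; rewrite e1 e2 e.
Qed.
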